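(* Let $C\subseteq\mathbb{F}_q^n$ be a constant weight linear code of dimension $k$, and let $0\leqslant i\leqslant k$. Then \[ N_i=\{\mathrm{Supp}(C') : C' \text{ is a subcode of } C \text{ of dimension } i\}. \]
   Context: A subcode is a linear subspace; $\mathrm{Supp}(D)=\{x: \exists d\in D,\ d_x\neq0\}$. A constant weight code is a linear code all of whose non-zero codewords have the same number of non-zero coordinates. Let $H_C$ be a parity check matrix of $C$ ($c\in C$ iff $cH_C^t=0$); the associated matroid has ground set $E=\{1,\dots,n\}$ and independent sets the subsets indexing linearly independent columns of $H_C$; $\mathrm{rank}(\sigma)$ is the maximal size of an independent subset of $\sigma$. $N_i$ denotes the set of inclusion-minimal subsets $\sigma\subseteq E$ with $\#\sigma-\mathrm{rank}(\sigma)=i$. *)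

(* Defs.v *)
From HB Require Import structures.
From mathcomp Require Import all_boot all_order all_algebra all_field.
Set Implicit Arguments. Unset Strict Implicit. Unset Printing Implicit Defensive.
Import GRing.Theory.
Local Open Scope ring_scope.

Section Codes.
Variables (F : finFieldType) (n : nat).

Definition wt (c : 'rV[F]_n) : nat := #|[set x : 'I_n | c 0 x != 0]|.

(* Linear codes / subcodes are row spaces of matrices (mxalgebra). *)
Definition constant_weight (C : 'M[F]_n) : Prop :=
  forall c1 c2 : 'rV[F]_n, (c1 <= C)%MS -> (c2 <= C)%MS ->
    c1 != 0 -> c2 != 0 -> wt c1 = wt c2.

Definition Supp (D : 'M[F]_n) : {set 'I_n} :=
  [set x : 'I_n | [exists d : 'rV[F]_n, (d <= D)%MS && (d 0 x != 0)]].

Definition parity_check (m : nat) (H : 'M[F]_(m, n)) (C : 'M[F]_n) : Prop :=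
  forall c : 'rV[F]_n, (c <= C)%MS = (c *m H^T == 0).

Definition col_indep (m : nat) (H : 'M[F]_(m, n)) (tau : {set 'I_n}) : bool :=
  [forall a : 'rV[F]_n,
     [forall j : 'I_n, (j \notin tau) ==> (a 0 j == 0)] ==>
     (H *m a^T == 0) ==> (a == 0)].

Definition mrank (m : nat) (H : 'M[F]_(m, n)) (sigma : {set 'I_n}) : nat :=
  \max_(tau : {set 'I_n} | (tau \subset sigma) && col_indep H tau) #|tau|.

Definition N_ (m : nat) (H : 'M[F]_(m, n)) (i : nat) : {set {set 'I_n}} :=
  [set sigma : {set 'I_n} |
     minset (fun s : {set 'I_n} => #|s| - mrank H s == i)%N sigma].

End Codes.

(* Main.v *)
Require Import Defs.
From HB Require Import structures.
From mathcomp Require Import all_boot all_order all_algebra all_field.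
From mathcomp Require Import zify.
Import GRing.Theory.
Local Open Scope ring_scope.

Section Aux.
Set Implicit Arguments. Unset Strict Implicit. Unset Printing Implicit Defensive.
Variables (F : finFieldType) (n : nat).

Definition E (s : {set 'I_n}) : 'M[F]_n := diag_mx (\row_j (j \in s)%:R).

Lemma sub_EP (s : {set 'I_n}) (v : 'rV[F]_n) :
  reflect (forall j, j \notin s -> v 0 j = 0) (v <= E s)%MS.
Proof.
apply: (iffP idP).
  move=> /submxP[w ->] j js; rewrite mul_mx_diag !mxE (negbTE js) mulr0 //.
move=> H; have -> : v = v *m E s.
  apply/matrixP => a j; rewrite mul_mx_diag !mxE (ord1 a).
  by case: (boolP (j \in s)) => js; [rewrite mulr1 | rewrite H // mulr0].
exact: submxMl.
Qed.

Lemma E_sub (s t : {set 'I_n}) : s \subset t -> (E s <= E t)%MS.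
Proof.
move=> st; apply/rV_subP => v /sub_EP H; apply/sub_EP => j jt; apply: H.
by apply: contra jt; apply: (subsetP st).
Qed.

Lemma card_subsp m (A : 'M[F]_(m, n)) :
  #|[set d : 'rV[F]_n | (d <= A)%MS]| = (#|F| ^ \rank A)%N.
Proof.
have -> : [set d : 'rV[F]_n | (d <= A)%MS] =
   [set v *m row_base A | v in 'rV[F]_(\rank A)].
  apply/setP => d; rewrite inE; apply/idP/imsetP.
    by rewrite -(eq_row_base A) => /submxP[v ->]; exists v.
  by case=> v _ ->; apply: submx_trans (submxMl _ _) _; rewrite eq_row_base.
rewrite card_imset ?card_mx ?mul1n //.
have [B AB1] := row_freeP (row_base_free A).
by apply: (can_inj (g := mulmx^~ B)) => v; rewrite -mulmxA AB1 mulmx1.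
Qed.

Lemma rank_E s : \rank (E s) = #|s|.
Proof.
move Hk: #|s| => k; elim: k s Hk => [|k IH] s Hs.
  move/eqP: Hs; rewrite cards_eq0 => /eqP ->; apply/eqP; rewrite mxrank_eq0.
  by apply/rowV0P => v /sub_EP H; apply/rowP => j; rewrite H ?inE ?mxE.
have [x xs] : exists x, x \in s by apply/set0Pn; rewrite -card_gt0 Hs.
have Hs' : #|s :\ x| = k by move: Hs; rewrite (cardsD1 x s) xs add1n => -[].
have eqS : (E s == E (s :\ x) + (delta_mx 0 x : 'rV[F]_n))%MS.
  apply/andP; split.
    apply/rV_subP => v /sub_EP H.
    have -> : v = (v - v 0 x *: delta_mx 0 x) + v 0 x *: delta_mx 0 x by rewrite subrK.
    apply: addmx_sub_adds; last by rewrite scalemx_sub.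
    apply/sub_EP => j; rewrite !inE negb_and negbK => /orP[/eqP->|js].
      by rewrite !mxE !eqxx /= mulr1 subrr.
    by rewrite !mxE H // (_ : (j == x) = false) ?mulr0 ?subr0 //; apply/negbTE;
       apply: contra js => /eqP->.
  rewrite addsmx_sub E_sub ?subD1set //=; apply/sub_EP => j js.
  by rewrite mxE eqxx /=; case: eqP => // xj; move: js; rewrite xj xs.
rewrite (eqmx_rank eqS) mxrank_disjoint_sum ?IH // ?mxrank_delta ?addn1 //.
apply/eqP/rowV0P => v; rewrite sub_capmx => /andP[/sub_EP H /sub_rVP[a va]].
have := H x; rewrite !inE eqxx /= va !mxE !eqxx /= mulr1 => a0.
by rewrite a0 ?scale0r.
Qed.

Section Matroid.
Variables (m : nat) (H : 'M[F]_(m, n)) (C : 'M[F]_n).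
Hypothesis HC : parity_check H C.

Definition nul (s : {set 'I_n}) := \rank (E s :&: C)%MS.

Lemma HaC (a : 'rV[F]_n) : (H *m a^T == 0) = (a <= C)%MS.
Proof.
by rewrite HC -(inj_eq (@trmx_inj _ _ _)) trmx_mul trmxK trmx0.
Qed.

Lemma indepE t : col_indep H t = (nul t == 0)%N.
Proof.
rewrite /nul mxrank_eq0; apply/forallP/rowV0P => [Hi v | Hv a].
  rewrite sub_capmx => /andP[/sub_EP vE vC]; apply/eqP.
  have h : [forall j, (j \notin t) ==> (v 0 j == 0)].
    by apply/forallP => j; apply/implyP => jt; rewrite vE.
  by move: (Hi v); rewrite h HaC vC.
apply/implyP => /forallP Ha; apply/implyP; rewrite HaC => aC; apply/eqP/Hv.
rewrite sub_capmx aC andbT; apply/sub_EP => j jt; apply/eqP.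
exact: (implyP (Ha j) jt).
Qed.

Lemma nul_le s : (nul s <= #|s|)%N.
Proof. by rewrite -rank_E /nul mxrankS ?capmxSl. Qed.

Lemma nul_mono (s t : {set 'I_n}) : s \subset t -> (nul s <= nul t)%N.
Proof. by move=> st; rewrite /nul mxrankS // capmxS // E_sub. Qed.

Lemma mrankE s : mrank H s = (#|s| - nul s)%N.
Proof.
apply/eqP; rewrite eqn_leq; apply/andP; split.
  apply/bigmax_leqP => t /andP[ts]; rewrite indepE => /eqP ind.
  rewrite leq_subRL ?nul_le // addnC -(rank_E t) /nul.
  have := mxrank_sum_cap (E t) (E s :&: C)%MS.
  have -> : \rank (E t :&: (E s :&: C))%MS = 0%N.
    apply/eqP; rewrite -leqn0 -ind mxrankS // capmxS ?capmxSr //.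
  rewrite addn0 => <-; rewrite -(rank_E s); apply: mxrankS.
  by rewrite addsmx_sub E_sub ?capmxSl.
have P0 : (set0 \subset s) && col_indep H set0.
  rewrite sub0set indepE /= -leqn0; apply: leq_trans (nul_le _) _.
  by rewrite cards0.
rewrite /mrank (@bigmax_eq_arg _ set0 (fun t => (t \subset s) && col_indep H t) _ P0).
case: arg_maxnP => // t0 /andP[t0s ind0] maxt.
move: (ind0); rewrite indepE => /eqP ind0'.
set K := (E s :&: C)%MS.
have dsub : forall j, j \in s -> ((delta_mx 0 j : 'rV[F]_n) <= E t0 + K)%MS.
  move=> j js; case: (boolP (j \in t0)) => jt0.
    apply: submx_trans (addsmxSl _ _); apply/sub_EP => k kt.
    by rewrite mxE eqxx /=; case: eqP => // jk; move: kt; rewrite jk jt0.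
  have : ~~ col_indep H (j |: t0).
    apply/negP => ind1; have := maxt (j |: t0).
    rewrite subUset sub1set js t0s ind1 cardsU1 jt0 /= => /(_ isT).
    by rewrite add1n ltnn.
  rewrite indepE /nul mxrank_eq0 => /rowV0Pn[c]; rewrite sub_capmx.
  case/andP=> /sub_EP cE cC cnz.
  have cj : c 0 j != 0.
    apply/negP => /eqP cj0; move/eqP: ind0'; rewrite /nul mxrank_eq0 => /rowV0P.
    move=> /(_ c); rewrite sub_capmx cC andbT => cz; move/eqP: cnz; apply.
    apply: cz; apply/sub_EP => k kt; case: (eqVneq k j) => [->//|kj].
    by apply: cE; rewrite !inE negb_or kj.
  set c' := c - c 0 j *: (delta_mx 0 j : 'rV[F]_n).
  have c'E : (c' <= E t0)%MS.
    apply/sub_EP => k kt; rewrite !mxE; case: (eqVneq k j) => [->|kj].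
      by rewrite !eqxx mulr1 subrr.
    by rewrite andbF mulr0 subr0 cE // !inE negb_or kj.
  have -> : (delta_mx 0 j : 'rV[F]_n) = - ((c 0 j)^-1 *: c') + (c 0 j)^-1 *: c.
    by rewrite /c' scalerBr scalerA mulVf // scale1r opprB subrK.
  apply: addmx_sub_adds.
    by rewrite -scaleNr scalemx_sub.
  rewrite scalemx_sub // sub_capmx cC andbT.
  have cjt : (c <= E (j |: t0))%MS by apply/sub_EP.
  by apply: submx_trans cjt (E_sub _); rewrite subUset sub1set js t0s.
have EsK : (E s <= E t0 + K)%MS.
  apply/rV_subP => v /sub_EP vs; rewrite (row_sum_delta v); apply: summx_sub => j _.
  case: (boolP (j \in s)) => js; first by rewrite scalemx_sub ?dsub.
  by rewrite vs // scale0r sub0mx.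
rewrite leq_subLR -(rank_E s) -(rank_E t0) addnC.
apply: leq_trans (mxrankS EsK) _.
by case: (mxrank_adds_leqif (E t0) K).
Qed.

Lemma diffE (s : {set 'I_n}) : (#|s| - mrank H s)%N = nul s.
Proof. by rewrite mrankE subKn ?nul_le. Qed.

End Matroid.

Lemma SuppP (D : 'M[F]_n) x :
  reflect (exists2 d : 'rV[F]_n, (d <= D)%MS & d 0 x != 0) (x \in Supp D).
Proof.
rewrite inE; apply: (iffP existsP) => [[d /andP[]] | [d dD dx]]; first by exists d.
by exists d; rewrite dD dx.
Qed.

Lemma card_sum (T : finType) (P : pred T) : #|[set x | P x]| = (\sum_x (P x : nat))%N.
Proof.
rewrite -sum1_card big_mkcond; apply: eq_bigr => x _; rewrite inE; by case: (P x).
Qed.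

Lemma count_x (D : 'M[F]_n) x : x \in Supp D ->
  #|[set d : 'rV[F]_n | (d <= D)%MS && (d 0 x != 0)]| =
  (#|F| ^ \rank D - #|F| ^ (\rank D).-1)%N.
Proof.
move=> /SuppP[d0 d0D d0x].
set Ex := E [set~ x].
have -> : [set d : 'rV[F]_n | (d <= D)%MS && (d 0 x != 0)] =
   [set d : 'rV[F]_n | (d <= D)%MS] :\: [set d : 'rV[F]_n | (d <= D :&: Ex)%MS].
  apply/setP => d; rewrite !inE sub_capmx; case: (d <= D)%MS; rewrite //= andbT.
  apply/idP/idP => [dx | dE].
    by apply/negP => /sub_EP /(_ x); rewrite !inE negbK eqxx => /(_ isT) /eqP; apply/negP.
  apply/negP => /eqP dx0; move/negP: dE; apply; apply/sub_EP => j.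
  by rewrite !inE negbK => /eqP ->.
rewrite cardsD (setIidPr _); last first.
  by apply/subsetP => d; rewrite !inE sub_capmx => /andP[].
rewrite !card_subsp; congr (_ - _)%N; congr (_ ^ _)%N.
have nEx : \rank Ex = n.-1 by rewrite /Ex rank_E cardsC1 card_ord.
have npos : (0 < n)%N := leq_ltn_trans (leq0n _) (ltn_ord x).
have fullr : \rank (D + Ex)%MS = n.
  apply/eqP; rewrite eqn_leq rank_leq_col /=.
  have : (\rank Ex < \rank (D + Ex))%N.
    rewrite (ltn_leqif (mxrank_leqif_sup (addsmxSr D Ex))).
    apply/negP => sub; have : (d0 <= Ex)%MS.
      by apply: submx_trans sub; apply: submx_trans d0D (addsmxSl _ _).
    by move/sub_EP => /(_ x); rewrite !inE negbK eqxx => /(_ isT) /eqP; apply/negP.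
  by rewrite nEx; move: npos; lia.
have := mxrank_sum_cap D Ex; rewrite fullr nEx.
move: (\rank (D :&: Ex)%MS) (\rank D) npos => a b; lia.
Qed.


Lemma sum_wt1 (D : 'M[F]_n) :
  (\sum_(d in [set d : 'rV[F]_n | (d <= D)%MS]) wt d =
   #|Supp D| * (#|F| ^ \rank D - #|F| ^ (\rank D).-1))%N.
Proof.
rewrite /wt; under eq_bigr => d _ do rewrite card_sum.
rewrite exchange_big /= -sum_nat_const.
rewrite [in RHS]big_mkcond /=; apply: eq_bigr => x _.
case: ifPn => xS; first by rewrite -(count_x xS) card_sum big_mkcond /=;
  apply: eq_bigr => d _; rewrite inE; case: (d <= D)%MS.
rewrite big1 // => d; rewrite inE => dD.
case: eqP => //= dx; case/SuppP: xS; exists d => //; exact/eqP.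
Qed.

Lemma sum_wt2 (D : 'M[F]_n) w :
  (forall d : 'rV[F]_n, (d <= D)%MS -> d != 0 -> wt d = w) ->
  (\sum_(d in [set d : 'rV[F]_n | (d <= D)%MS]) wt d = (#|F| ^ \rank D - 1) * w)%N.
Proof.
move=> Hw; rewrite (bigD1 0) ?inE ?sub0mx //=.
have -> : wt (0 : 'rV[F]_n) = 0%N.
  by apply/eqP; rewrite cards_eq0; apply/eqP/setP => x; rewrite !inE mxE eqxx.
rewrite add0n (eq_bigr (fun _ => w)); last first.
  by move=> d /andP[]; rewrite inE => dD dnz; apply: Hw.
rewrite (eq_bigl (fun d => d \in [set d : 'rV[F]_n | (d <= D)%MS] :\ 0)); last first.
  by move=> d; rewrite !inE andbC.
rewrite sum_nat_const -card_subsp [#|[set d : 'rV[F]_n | _]|](cardsD1 0) inE sub0mx /=.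
by rewrite add1n subn1.
Qed.


Lemma wt_gt0 (d : 'rV[F]_n) : d != 0 -> (0 < wt d)%N.
Proof.
move=> dnz; rewrite /wt card_gt0; apply: contraR dnz => /negbNE/eqP e.
apply/eqP/rowP => j; rewrite mxE; apply/eqP; apply/negPn; apply/negP => dj.
by move: (in_set0 j); rewrite -e inE dj.
Qed.

Lemma cw_rank (C D1 D2 : 'M[F]_n) : constant_weight C ->
  (D1 <= D2)%MS -> (D2 <= C)%MS -> Supp D1 = Supp D2 -> \rank D1 = \rank D2.
Proof.
move=> cw D12 D2C eqS.
have r12 := mxrankS D12.
apply/eqP; rewrite eqn_leq r12 /= leqNgt; apply/negP => lt12.
have : D2 != 0 by rewrite -mxrank_eq0 -lt0n; apply: leq_ltn_trans lt12.
case/rowV0Pn => d0 d0D d0nz.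
set w := wt d0.
have wpos : (0 < w)%N by apply: wt_gt0.
have Hw : forall D : 'M[F]_n, (D <= D2)%MS -> forall d : 'rV[F]_n, (d <= D)%MS -> d != 0 -> wt d = w.
  move=> D DD2 d dD dnz; apply: cw => //.
    by apply: submx_trans dD (submx_trans DD2 D2C).
  by apply: submx_trans d0D D2C.
have e1 := sum_wt2 (Hw D1 D12); rewrite sum_wt1 in e1.
have e2 := sum_wt2 (Hw D2 (submx_refl _)); rewrite sum_wt1 -eqS in e2.
have q2 : (1 < #|F|)%N by rewrite (cardD1 0) (cardD1 1) !inE oner_neq0.
move: e1 e2 lt12; set S := #|Supp D1|.
case r1 : (\rank D1) => [|a].
  have -> : S = 0%N.
    apply/eqP; rewrite cards_eq0; apply/eqP/setP => x; rewrite in_set0.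
    apply/negP => /SuppP[d dD dx]; move/eqP: r1; rewrite mxrank_eq0 => /eqP D0.
    by move: dD; rewrite D0 submx0 => /eqP dz; move: dx; rewrite dz mxE eqxx.
  move=> _; case: (\rank D2) => // b; rewrite mul0n => /esym/eqP.
  rewrite muln_eq0 subn_eq0 => /orP[|]; last by move/eqP => w0; rewrite w0 in wpos.
  by rewrite -{1}(expn0 #|F|) leq_exp2l.
case: (\rank D2) => // b /=; rewrite ltnS => e1 e2 ab.
have [k bk] : exists k, b = (a + k.+1)%N by exists (b - a.+1)%N; lia.
subst b.
have Y2 : (1 < #|F| ^ k.+1)%N by rewrite -(expn0 #|F|) ltn_exp2l.
rewrite /= (expnS _ a) in e1; rewrite /= (expnS _ (a + k.+1)) expnD in e2.
have Xp := expn_gt0 #|F| a; rewrite (ltnW q2) /= in Xp.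
move: (#|F| ^ a)%N (#|F| ^ k.+1)%N Xp Y2 e1 e2 => X Y Xp Yp e1 e2.
move: (#|F|) q2 e1 e2 => Q Q2 e1 e2.
nia.
Qed.

End Aux.

Theorem proposition3 (F : finFieldType) (n m : nat) (C : 'M[F]_n)
  (H : 'M[F]_(m, n)) (i : nat) :
  parity_check H C ->
  constant_weight C ->
  (i <= \rank C)%N ->
  N_ H i = [set Supp D | D in [pred D : 'M[F]_n | (D <= C)%MS && (\rank D == i)]].
Proof.
move=> HC cw _; apply/setP => s; rewrite inE.
rewrite (minset_eq (P2 := fun s => nul C s == i)); last by move=> t; rewrite (diffE HC).
apply/minsetP/imsetP => [[/eqP Pn minn] | [D HD ->]].
  exists (E F s :&: C)%MS; first by rewrite inE /= capmxSr; rewrite -Pn eqxx.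
  apply/setP => x; apply/idP/idP => [xs | /SuppP[d dD dx]].
    apply/negPn/negP => xS.
    have sub : ((E F s :&: C)%MS <= (E F (s :\ x) :&: C)%MS)%MS.
      rewrite sub_capmx capmxSr andbT; apply/rV_subP => v vD; apply/sub_EP => j.
      rewrite !inE negb_and negbK => /orP[/eqP-> | js].
        by apply/eqP/negPn/negP => vx; move/negP: xS; apply; apply/SuppP; exists v.
      by move: vD; rewrite sub_capmx => /andP[/sub_EP vE _]; apply: vE.
    have eqt : nul C (s :\ x) == i.
      rewrite eqn_leq -{1}Pn nul_mono ?subD1set //= -Pn /nul; exact: mxrankS.
    have := minn _ eqt (subD1set s x) => /setP /(_ x).
    by rewrite !inE eqxx xs.
  move: dD; rewrite sub_capmx => /andP[/sub_EP dE _].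
  by apply/negPn/negP => xs; move: dx; rewrite dE // eqxx.
move: HD; rewrite inE => /andP[DC /eqP rD].
set K := (E F (Supp D) :&: C)%MS.
have DE : (D <= E F (Supp D))%MS.
  apply/rV_subP => v vD; apply/sub_EP => j jn; apply/eqP/negPn/negP => vj.
  by move/negP: jn; apply; apply/SuppP; exists v.
have DK : (D <= K)%MS by rewrite sub_capmx DE.
have KS : Supp D = Supp K.
  apply/setP => x; apply/idP/idP => [/SuppP[d dD dx] | /SuppP[d dK dx]].
    by apply/SuppP; exists d => //; apply: submx_trans DK.
  move: dK; rewrite sub_capmx => /andP[/sub_EP dE _].
  by apply/negPn/negP => xs; move: dx; rewrite dE // eqxx.
have rK : \rank K = i by rewrite -rD; symmetry; apply: (cw_rank cw) => //; apply: capmxSr.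
split; first by rewrite /nul -/K rK.
move=> B /eqP nB sB; apply/eqP; rewrite eqEsubset sB /=; apply/subsetP => x xS.
have BK : ((E F B :&: C)%MS <= K)%MS by rewrite capmxS // (E_sub F).
case: (mxrank_leqif_eq BK) => _; rewrite -/(nul C B) nB rK eqxx => /esym eqK.
move/andP: eqK => [_ KB].
case/SuppP: xS => d dD dx.
have : (d <= E F B :&: C)%MS by apply: submx_trans KB; apply: submx_trans DK.
rewrite sub_capmx => /andP[/sub_EP dE _].
by apply/negPn/negP => xs; move: dx; rewrite dE // eqxx.
Qed.
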